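(* Let $G$ be the final graph of the uncoordinated construction (described in the context) on a set $P\subset\mathbb{R}^d$ of $n$ points with parameter $s>1$, and let $\alpha$ be the aspect ratio of $P$. Then the total Euclidean length of the edges of $G$ is $O(\lg\alpha\cdot|\mathrm{MST}|\cdot s^{d+1})$, where $|\mathrm{MST}|$ is the total length of a Euclidean minimum spanning tree of $P$ and the implied constant depends only on $d$.
   Context: Fix $d\ge 1$; $|xy|$ is Euclidean distance; $\lg$ is logarithm base 2. The aspect ratio is $\alpha=\max_{u,v\in P}|uv|/\min_{u\ne v\in P}|uv|$. Uncoordinated construction: start with the graph $G$ on vertex set $P$ with no edges. Every ordered pair $(p,q)$ of distinct points of $P$ is processed exactly once, in an arbitrary order, one at a time. When $(p,q)$ is processed, the edge $pq$ is added to $G$ unless $G$ currently contains an edge whose endpoints can be labeled $p',q'$ with $|pp'|\le |p'q'|/(2s+2)$ and $|qq'|\le |p'q'|/(2s+2)$. $G$ is the graph after all pairs are processed. *)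

(* Defs.v *)
From HB Require Import structures.
From mathcomp Require Import all_boot all_order all_algebra.
From mathcomp Require Import reals exp.
Set Implicit Arguments. Unset Strict Implicit. Unset Printing Implicit Defensive.
Import Order.TTheory GRing.Theory Num.Theory.
Local Open Scope ring_scope.

Section Defs.
Variables (R : realType) (d n : nat).
Implicit Types (p : 'I_n -> 'rV[R]_d).

Definition edist (x y : 'rV[R]_d) : R :=
  Num.sqrt (\sum_(k < d) (x 0 k - y 0 k) ^+ 2).

Definition lg (x : R) : R := ln x / ln 2.

Definition diameter p : R :=
  \big[Num.max/0]_(i < n) \big[Num.max/0]_(j < n) edist (p i) (p j).

(* min_{u <> v} |uv|  (meaningful when n >= 2) *)
Definition min_dist p : R :=
  \big[Num.min/diameter p]_(i < n) \big[Num.min/diameter p]_(j < n | j != i)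
     edist (p i) (p j).

Definition aspect_ratio p : R := diameter p / min_dist p.

(* The test performed when the ordered pair (i,j) is processed: G (a set of
   edges, each stored as the ordered pair it was added as) contains an edge
   {a,b} whose endpoints can be labeled p',q' with
   |p p'| <= |p'q'|/(2s+2) and |q q'| <= |p'q'|/(2s+2). *)
Definition covered p (s : R) (E : {set 'I_n * 'I_n}) (i j : 'I_n) : bool :=
  [exists e in E,
     let a := e.1 in let b := e.2 in
     let r := edist (p a) (p b) / (2 * s + 2) in
     ((edist (p i) (p a) <= r) && (edist (p j) (p b) <= r)) ||
     ((edist (p i) (p b) <= r) && (edist (p j) (p a) <= r))].

Definition process p (s : R) (E : {set 'I_n * 'I_n}) (e : 'I_n * 'I_n) :=
  if covered p s E e.1 e.2 then E else e |: E.

Definition uncoord_graph p (s : R) (ord : seq ('I_n * 'I_n)) :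
  {set 'I_n * 'I_n} := foldl (process p s) set0 ord.

Definition graph_length p (E : {set 'I_n * 'I_n}) : R :=
  \sum_(e in E) edist (p e.1) (p e.2).

Definition tree_rel (T : {set {set 'I_n}}) : rel 'I_n :=
  fun u v => [set u; v] \in T.

Definition is_spanning_tree (T : {set {set 'I_n}}) : Prop :=
  [/\ forall f, f \in T -> #|f| = 2%N,
      forall u v : 'I_n, connect (tree_rel T) u v
    & #|T| = n.-1].

Definition tree_length p (T : {set {set 'I_n}}) : R :=
  \sum_(f in T) \sum_(u in f) \sum_(v in f | (u < v)%N) edist (p u) (p v).

Definition is_EMST p (T : {set {set 'I_n}}) : Prop :=
  is_spanning_tree T /\
  forall T', is_spanning_tree T' -> tree_length p T <= tree_length p T'.

End Defs.

(* Main.v *)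
Require Import Defs.
From HB Require Import structures.
From mathcomp Require Import all_boot all_order all_algebra.
From mathcomp Require Import reals exp.
From mathcomp Require Import ring lra zify.
Import Order.TTheory GRing.Theory Num.Theory.
Local Open Scope ring_scope.
Set Implicit Arguments. Unset Strict Implicit. Unset Printing Implicit Defensive.

Section Metric.
Variables (R : realType) (d : nat).
Implicit Types x y z : 'rV[R]_d.

Lemma cauchy_schwarz (a b : 'I_d -> R) :
  (\sum_k a k * b k) ^+ 2 <= (\sum_k a k ^+ 2) * (\sum_k b k ^+ 2).
Proof.
set A := \sum_k a k ^+ 2; set B := \sum_k b k ^+ 2; set c := \sum_k a k * b k.
have A0 : 0 <= A by apply: sumr_ge0 => k _; exact: sqr_ge0.
have B0 : 0 <= B by apply: sumr_ge0 => k _; exact: sqr_ge0.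
have [Az|Ap] := eqVneq A 0.
  have ak : forall k, a k = 0.
    move=> k; apply/eqP; rewrite -sqrf_eq0; apply/eqP.
    by apply: (psumr_eq0P (P := xpredT) (F := fun k => a k ^+ 2)) => // i _; exact: sqr_ge0.
  have -> : c = 0 by rewrite /c big1 // => k _; rewrite ak mul0r.
  by rewrite expr0n /= Az mul0r.
have Apos : 0 < A by rewrite lt_def Ap A0.
have E : \sum_k (A * b k - c * a k) ^+ 2 = A * (A * B - c ^+ 2).
  rewrite (eq_bigr (fun k => A ^+ 2 * b k ^+ 2 + (- (2 * A * c) * (a k * b k) + c ^+ 2 * a k ^+ 2))); last first.
    by move=> k _; ring.
  rewrite !big_split /= -!mulr_sumr -/A -/B -/c; ring.
have : 0 <= A * (A * B - c ^+ 2).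
  by rewrite -E; apply: sumr_ge0 => k _; exact: sqr_ge0.
by rewrite pmulr_rge0 // subr_ge0.
Qed.

Definition sq (x y : 'rV[R]_d) := \sum_(k < d) (x 0 k - y 0 k) ^+ 2.

Lemma sq_ge0 x y : 0 <= sq x y.
Proof. by apply: sumr_ge0 => k _; exact: sqr_ge0. Qed.

Lemma edist_ge0 x y : 0 <= edist x y.
Proof. exact: sqrtr_ge0. Qed.

Lemma edist_sym x y : edist x y = edist y x.
Proof. by rewrite /edist; congr Num.sqrt; apply: eq_bigr => k _; rewrite -sqrrN opprB. Qed.

Lemma edistxx x : edist x x = 0.
Proof. by rewrite /edist big1 ?sqrtr0 // => k _; rewrite subrr expr0n. Qed.

Lemma edist_eq0 x y : edist x y = 0 -> x = y.
Proof.
move=> /eqP; rewrite sqrtr_eq0 => H.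
have H0 : \sum_(k < d) (x 0 k - y 0 k) ^+ 2 = 0.
  by apply/eqP; rewrite eq_le H; exact: (sq_ge0 x y).
apply/rowP => k; apply/eqP; rewrite -subr_eq0 -sqrf_eq0; apply/eqP.
by apply: (psumr_eq0P (P := xpredT) (F := fun k => (x 0 k - y 0 k) ^+ 2)) => // i _; exact: sqr_ge0.
Qed.

Lemma coord_le x y k : `|x 0 k - y 0 k| <= edist x y.
Proof.
rewrite -sqrtr_sqr /edist ler_wsqrtr //.
rewrite (bigD1 k) //= lerDl; apply: sumr_ge0 => i _; exact: sqr_ge0.
Qed.

Lemma edist_triangle x y z : edist x z <= edist x y + edist y z.
Proof.
set a := fun k => x 0 k - y 0 k; set b := fun k => y 0 k - z 0 k.
have eA : edist x y = Num.sqrt (\sum_k a k ^+ 2) by [].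
have eB : edist y z = Num.sqrt (\sum_k b k ^+ 2) by [].
have eC : edist x z = Num.sqrt (\sum_k (a k + b k) ^+ 2).
  by rewrite /edist; congr Num.sqrt; apply: eq_bigr => k _; rewrite /a /b; congr (_ ^+ 2); ring.
set A := \sum_k a k ^+ 2; set B := \sum_k b k ^+ 2; set c := \sum_k a k * b k.
have A0 : 0 <= A by apply: sumr_ge0 => k _; exact: sqr_ge0.
have B0 : 0 <= B by apply: sumr_ge0 => k _; exact: sqr_ge0.
have S : \sum_k (a k + b k) ^+ 2 = A + B + 2 * c.
  rewrite (eq_bigr (fun k => a k ^+ 2 + (b k ^+ 2 + 2 * (a k * b k)))); last by move=> k _; ring.
  by rewrite !big_split /= -mulr_sumr -/A -/B -/c addrA.
have cle : c <= Num.sqrt A * Num.sqrt B.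
  apply: le_trans (ler_norm c) _.
  rewrite -sqrtr_sqr -sqrtrM // ler_wsqrtr //; exact: cauchy_schwarz.
rewrite eC eA eB S -/A -/B.
have sA := sqrtr_ge0 A; have sB := sqrtr_ge0 B.
rewrite -(ger0_norm (addr_ge0 sA sB)) -sqrtr_sqr ler_wsqrtr //.
rewrite sqrrD !sqr_sqrtr //.
lra.
Qed.

End Metric.


Section Constr.
Variables (R : realType) (d n : nat) (p : 'I_n -> 'rV[R]_d) (s : R).

Definition cov1 (e : 'I_n * 'I_n) (i j : 'I_n) : bool :=
     let a := e.1 in let b := e.2 in
     let r := edist (p a) (p b) / (2 * s + 2) in
     ((edist (p i) (p a) <= r) && (edist (p j) (p b) <= r)) ||
     ((edist (p i) (p b) <= r) && (edist (p j) (p a) <= r)).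

Lemma coveredE E i j : covered p s E i j = [exists e in E, cov1 e i j].
Proof. by []. Qed.

Definition sepE (E : {set 'I_n * 'I_n}) :=
  forall e f, e \in E -> f \in E -> e != f -> ~~ cov1 e f.1 f.2 || ~~ cov1 f e.1 e.2.

Lemma process_sep E x : sepE E -> sepE (process p s E x).
Proof.
rewrite /process; case: ifP => // /negbT; rewrite coveredE negb_exists => /forallP H sE.
move=> e f; rewrite !in_setU1 => /orP[/eqP->|eE] /orP[/eqP->|fE].
- by rewrite eqxx.
- move=> _; move: (H f); rewrite fE /= => ->; by rewrite orbT.
- by move=> _; move: (H e); rewrite eE /= => ->.
- exact: sE.
Qed.

Lemma foldl_sep l E : sepE E -> sepE (foldl (process p s) E l).
Proof. by elim: l E => //= x l IH E sE; apply: IH; apply: process_sep. Qed.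

Lemma foldl_mem l E e : e \in foldl (process p s) E l -> (e \in E) || (e \in l).
Proof.
elim: l E => [|x l IH] E /=; first by rewrite orbF.
move=> /IH /orP[|H]; last by rewrite in_cons H !orbT.
rewrite /process; case: ifP => [_ ->//|_]; rewrite in_setU1 => /orP[/eqP->|->//].
by rewrite in_cons eqxx orbT.
Qed.

Lemma graph_sep ord : sepE (uncoord_graph p s ord).
Proof. apply: foldl_sep => e f; by rewrite in_set0. Qed.

Lemma graph_mem ord e : e \in uncoord_graph p s ord -> e \in ord.
Proof. by move=> /foldl_mem; rewrite in_set0. Qed.

End Constr.


Lemma min_lip (R : realType) (c a b : R) : `|Num.min c a - Num.min c b| <= `|a - b|.
Proof.
have N1 := ler_norm (a-b); have N2 : -(a-b) <= `|a-b| by rewrite -normrN ler_norm.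
rewrite /Num.min; case: (ltP c a); case: (ltP c b) => h1 h2; rewrite ler_norml; apply/andP; split; lra.
Qed.

Section Tree.
Variables (R : realType) (d n : nat) (p : 'I_n -> 'rV[R]_d).
Local Notation dist i j := (edist (p i) (p j)).

Definition Wf (w : 'I_n -> 'I_n -> R) (f : {set 'I_n}) : R :=
  \sum_(u in f) \sum_(v in f | (u < v)%N) w u v.

Lemma W_pair w x y : x != y -> (forall u v, w u v = w v u) -> Wf w [set x; y] = w x y.
Proof.
move=> xy wsym; have xny : x \notin [set y] by rewrite in_set1.
rewrite /Wf big_setU1 //= big_set1 !big_mkcondr /= !big_setU1 //= !big_set1 !ltnn !addr0 add0r.
case: (ltngtP x y) => h.
- by rewrite addr0.
- by rewrite add0r wsym.
- by move: xy; rewrite (val_inj h) eqxx.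
Qed.

Lemma tree_lengthE T : tree_length p T = \sum_(f in T) Wf (fun u v => dist u v) f.
Proof. by []. Qed.

Variable rho : R.
Hypothesis rho_gt0 : 0 < rho.

Definition gf (u x : 'I_n) : R := Num.min (rho / 2) (dist u x).
Definition hf (u : 'I_n) (f : {set 'I_n}) : R := Wf (fun a b => `|gf u a - gf u b|) f.

Lemma gf_lip u a b : `|gf u a - gf u b| <= dist a b.
Proof.
apply: le_trans (min_lip _ _ _) _.
have t1 := edist_triangle (p u) (p a) (p b).
have t2 := edist_triangle (p u) (p b) (p a).
rewrite (edist_sym (p b) (p a)) in t2.
rewrite ler_norml; apply/andP; split; lra.
Qed.

Lemma path_bound u : forall q x (A : {set {set 'I_n}}),
  uniq (x :: q) -> path (fun a b => [set a; b] \in A) x q ->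
  `|gf u (last x q) - gf u x| <= \sum_(f in A) hf u f.
Proof.
have hf0 : forall f, 0 <= hf u f.
  by move=> f; apply: sumr_ge0 => a _; apply: sumr_ge0 => b _.
elim=> [|y q IH] x A /=.
  by move=> _ _; rewrite subrr normr0; apply: sumr_ge0.
move=> /andP[xnin uq] /andP[e0A pth].
rewrite (bigD1 [set x; y]) //=.
have xy : x != y by apply: contraNneq xnin => ->; rewrite in_cons eqxx.
have -> : hf u [set x; y] = `|gf u x - gf u y|.
  by rewrite /hf W_pair // => a b; rewrite distrC.
set A' := A :\ [set x; y].
have pth' : path (fun a b => [set a; b] \in A') y q.
  apply: (sub_in_path (P := mem (y :: q))) _ _ pth; last first.
    by apply/allP => z.
  move=> a b ain bin /= abA; rewrite in_setD1 abA andbT.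
  apply/eqP => E; have : x \in [set a; b] by rewrite E set21.
  rewrite in_set2 => /orP[/eqP xa|/eqP xb].
  - by move: xnin; rewrite xa ain.
  - by move: xnin; rewrite xb bin.
have := IH y A' uq pth'.
have -> : \sum_(f in A') hf u f = \sum_(f in A | f != [set x; y]) hf u f.
  by apply: eq_bigl => f; rewrite in_setD1 andbC.
move=> H.
apply: le_trans (_ : `|gf u x - gf u y| + `|gf u (last y q) - gf u y| <= _); last first.
  exact: lerD.
rewrite distrC.
have := ler_normD (gf u x - gf u y) (gf u y - gf u (last y q)).
have -> : gf u x - gf u y + (gf u y - gf u (last y q)) = gf u x - gf u (last y q) by ring.
by rewrite (distrC (gf u y)).
Qed.


Variable S : {set 'I_n}.
Hypothesis sepS : forall u v, u \in S -> v \in S -> u != v -> rho < dist u v.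

Lemma one_ind x : \sum_(u in S) (if dist u x < rho / 2 then 1 else 0 : R) <= 1.
Proof.
case: (pickP [pred u | (u \in S) && (dist u x < rho / 2)]) => [u0 /andP[u0S h0]| none].
- rewrite (bigD1 u0) //= h0 big1 ?addr0 // => u /andP[uS une]; case: ifP => // h.
  have := sepS uS u0S une; have := edist_triangle (p u) (p x) (p u0).
  rewrite (edist_sym (p x)); lra.
- rewrite big1 ?ler01 // => u uS; move: (none u) => /=; rewrite uS /=; by move=> ->.
Qed.

Lemma edge_bound x y : x != y ->
  \sum_(u in S) hf u [set x; y] <= 2 * dist x y.
Proof.
move=> xy.
have hfE : forall u, hf u [set x; y] = `|gf u x - gf u y|.
  by move=> u; rewrite /hf W_pair // => a b; rewrite distrC.
under eq_bigr do rewrite hfE.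
apply: le_trans (_ : \sum_(u in S) ((if dist u x < rho / 2 then 1 else 0) +
   (if dist u y < rho / 2 then 1 else 0)) * dist x y <= _).
  apply: ler_sum => u _.
  have L := gf_lip u x y.
  have D0 := edist_ge0 (p x) (p y).
  case: ifP => hx; case: ifP => hy; try lra.
  rewrite addr0 mul0r.
  have -> : gf u x = rho / 2 by rewrite /gf /Num.min; case: ltP => //; move: hx => /negbT; rewrite -leNgt; lra.
  have -> : gf u y = rho / 2 by rewrite /gf /Num.min; case: ltP => //; move: hy => /negbT; rewrite -leNgt; lra.
  by rewrite subrr normr0.
rewrite -mulr_suml big_split /=.
have := one_ind x; have := one_ind y; have := edist_ge0 (p x) (p y); nra.
Qed.

Hypotheses (T : {set {set 'I_n}}) (T2 : forall f, f \in T -> #|f| = 2%N)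
  (Tc : forall u v, connect (tree_rel T) u v).

Lemma per_s u : u \in S -> (1 < #|S|)%N -> rho / 2 <= \sum_(f in T) hf u f.
Proof.
move=> uS S2.
have : (0 < #|S :\ u|)%N by move: S2; rewrite (cardsD1 u S) uS.
case/card_gt0P => v; rewrite in_setD1 => /andP[vu vS].
have /connectP [q pq lq] := Tc u v.
move: lq; case: (shortenP pq) => q' pq' uq' _ lq.
have := @path_bound u q' u T uq' pq'.
rewrite -lq.
have -> : gf u u = 0 by rewrite /gf edistxx /Num.min; case: ltP => // h; exfalso; move: h rho_gt0; lra.
have -> : gf u v = rho / 2.
  have uv : u != v by rewrite eq_sym.
  have h := sepS uS vS uv.
  rewrite /gf /Num.min; case: (ltP (rho / 2)) => // h1; exfalso; move: h h1 rho_gt0; lra.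
have r2 : 0 <= rho / 2 by move: rho_gt0; lra.
by rewrite subr0 ger0_norm.
Qed.

Lemma net_tree : (1 < #|S|)%N -> #|S|%:R * rho <= 4 * tree_length p T.
Proof.
move=> S2.
have H1 : \sum_(u in S) (rho / 2) <= \sum_(u in S) \sum_(f in T) hf u f.
  apply: ler_sum => u uS; exact: per_s.
rewrite sumr_const -mulr_natr in H1.
rewrite exchange_big /= in H1.
have H2 : \sum_(f in T) \sum_(u in S) hf u f <= \sum_(f in T) 2 * Wf (fun u v => dist u v) f.
  apply: ler_sum => f fT; move/eqP: (T2 fT) => /cards2P [x [y [xy ->]]].
  rewrite W_pair //; first exact: edge_bound.
  by move=> a b; rewrite edist_sym.
rewrite -mulr_sumr -tree_lengthE in H2.
lra.
Qed.

End Tree.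


Section Net.
Variables (R : realType) (d n : nat) (p : 'I_n -> 'rV[R]_d).
Local Notation dist i j := (edist (p i) (p j)).

Lemma net_exists (rho : R) : 0 <= rho -> exists S : {set 'I_n},
  (forall u v, u \in S -> v \in S -> u != v -> rho < dist u v) /\
  (forall i, exists2 u, u \in S & dist i u <= rho).
Proof.
move=> rho0.
pose P (A : {set 'I_n}) := [forall u in A, forall v in A, (u != v) ==> (rho < dist u v)].
have P0 : P set0 by apply/forall_inP => u; rewrite in_set0.
case: (arg_maxnP (fun A : {set 'I_n} => #|A|) P0) => S PS maxS.
have sepS : forall u v, u \in S -> v \in S -> u != v -> rho < dist u v.
  move=> u v uS vS uv; move/forall_inP: PS => /(_ u uS) /forall_inP /(_ v vS).
  by rewrite uv.
exists S; split => // i.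
case: (boolP [exists u in S, dist i u <= rho]) => [/exists_inP [u uS h]|nf].
  by exists u.
exfalso.
have far : forall u, u \in S -> rho < dist i u.
  move=> u uS; rewrite ltNge; apply/negP => h; move/negP: nf; apply.
  by apply/exists_inP; exists u.
have iS : i \notin S.
  by apply/negP => iS; have := far i iS; rewrite edistxx; lra.
have PiS : P (i |: S).
  apply/forall_inP => u; rewrite in_setU1 => /orP[/eqP->|uS];
  apply/forall_inP => v; rewrite in_setU1 => /orP[/eqP->|vS]; apply/implyP => uv.
  - by rewrite eqxx in uv.
  - exact: far.
  - by rewrite edist_sym; exact: far.
  - exact: sepS.
have := maxS _ PiS; rewrite cardsU1 iS /=; by rewrite ltnn.
Qed.

Variables (rho : R) (S : {set 'I_n}) (c : 'rV[R]_d) (R0 : R).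
Hypothesis rho_gt0 : 0 < rho.
Hypothesis sepS : forall u v, u \in S -> v \in S -> u != v -> rho < dist u v.
Hypothesis R0_ge0 : 0 <= R0.

Let h := rho / (d.+1)%:R.
Let N := (Num.truncn (R0 / h)).+1.
Let M := (2 * N).+1.

Definition cellf (x : 'rV[R]_d) : {ffun 'I_d -> 'I_M} :=
  [ffun k : 'I_d => inord (absz (Num.floor ((x 0 k - c 0 k) / h) + N%:Z)%R)].

Lemma h_gt0 : 0 < h.
Proof. by rewrite /h divr_gt0 // ltr0n. Qed.

Lemma floor_bounds x k : edist c x <= R0 ->
  (- N%:Z <= Num.floor ((x 0 k - c 0 k) / h)) && (Num.floor ((x 0 k - c 0 k) / h) < N%:Z).
Proof.
move=> xc.
have hp := h_gt0.
have ck : `|x 0 k - c 0 k| <= R0.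
  by apply: le_trans xc; rewrite distrC; exact: coord_le.
have hN : R0 / h < N%:R by exact: truncnS_gt.
have a1 : (x 0 k - c 0 k) / h <= R0 / h by rewrite ler_pM2r ?invr_gt0 //; apply: le_trans (ler_norm _) ck.
have a2 : - (R0 / h) <= (x 0 k - c 0 k) / h.
  rewrite -mulNr ler_pM2r ?invr_gt0 //; rewrite lerNl; apply: le_trans (ler_norm _) _; by rewrite normrN.
apply/andP; split.
- rewrite real_floor_ge_int ?num_real //; rewrite intrN /=; have : (N%:Z)%:~R = N%:R :> R by [].
  move=> ->; lra.
- rewrite real_floor_lt_int ?num_real //; have : (N%:Z)%:~R = N%:R :> R by []. move=> ->; lra.
Qed.

Lemma cell_inj : {in [set u in S | edist c (p u) <= R0] &, injective (fun u => cellf (p u))}.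
Proof.
move=> u v; rewrite !inE => /andP[uS uc] /andP[vS vc] E.
apply/eqP; apply/negP => /negP uv.
have := sepS uS vS uv; apply/negP; rewrite -leNgt.
have hp := h_gt0.
have ck : forall k, `|p u 0 k - p v 0 k| <= h.
  move=> k.
  have := congr1 (fun f : {ffun 'I_d -> 'I_M} => f k) E; rewrite /= !ffunE.
  move: (floor_bounds k uc) (floor_bounds k vc) => /andP[l1 u1] /andP[l2 u2].
  set fu := Num.floor _ in l1 u1 *; set fv := Num.floor _ in l2 u2 *.
  have gu : 0 <= fu + N%:Z by rewrite -lerBlDr sub0r.
  have gv : 0 <= fv + N%:Z by rewrite -lerBlDr sub0r.
  have bu : (absz (fu + N%:Z)%R < M)%N.
    rewrite -(ltz_nat) gez0_abs // /M; move: u1; lia.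
  have bv : (absz (fv + N%:Z)%R < M)%N.
    rewrite -(ltz_nat) gez0_abs // /M; move: u2; lia.
  move/(congr1 val); rewrite /= !inordK // => /(congr1 Posz); rewrite !gez0_abs // => /addIr fuv.
  have := floor_itv ((p u 0 k - c 0 k) / h); have := floor_itv ((p v 0 k - c 0 k) / h).
  rewrite -/fu -/fv fuv intrD => /andP[a1 a2] /andP[b1 b2].
  have : `|(p u 0 k - c 0 k) / h - (p v 0 k - c 0 k) / h| <= 1.
    rewrite ler_norml; apply/andP; split; lra.
  have hi : 0 < h^-1 by rewrite invr_gt0.
  have -> : p u 0 k - p v 0 k = p u 0 k - c 0 k - (p v 0 k - c 0 k) by ring.
  by rewrite -mulrBl normrM (gtr0_norm hi) ler_pdivrMr // mul1r.
rewrite /edist -(ger0_norm (ltW rho_gt0)) -sqrtr_sqr ler_wsqrtr //.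
apply: le_trans (_ : \sum_(k < d) h ^+ 2 <= _).
  apply: ler_sum => k _; rewrite -real_normK ?num_real //.
  by rewrite lerXn2r ?nnegrE ?normr_ge0 ?(ltW hp).
rewrite sumr_const card_ord.
have e : rho = h * (d.+1)%:R by rewrite /h divfK ?pnatr_eq0.
have e2 : rho ^+ 2 = h ^+ 2 * (d.+1)%:R ^+ 2 by rewrite -exprMn -e.
have hd : (d%:R : R) <= (d.+1)%:R ^+ 2 by rewrite -natrX ler_nat; lia.
rewrite -mulr_natr e2; apply: ler_wpM2l => //; exact: sqr_ge0.
Qed.

Lemma packing : (#|[set u in S | (edist c (p u) <= R0)%R]| <= M ^ d)%N.
Proof.
rewrite -(card_in_imset cell_inj).
apply: leq_trans (max_card _) _.
by rewrite card_ffun !card_ord.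
Qed.

Lemma M_bound : (M%:R : R) <= 2 * (R0 / rho * (d.+1)%:R) + 3.
Proof.
have hN : ((Num.truncn (R0 / h))%:R : R) <= R0 / h.
  by rewrite truncn_le divr_ge0 // ltW // h_gt0.
have e : R0 / h = R0 / rho * (d.+1)%:R by rewrite /h invf_div mulrA mulrAC.
rewrite e in hN.
rewrite /M /N -addn1 natrD mulnC natrM -addn1 natrD e.
lra.
Qed.

End Net.


Section Class.
Variables (R : realType) (d n : nat) (p : 'I_n -> 'rV[R]_d) (s : R)
  (ord : seq ('I_n * 'I_n)) (T : {set {set 'I_n}}).
Hypothesis s_gt1 : 1 < s.
Hypotheses (T2 : forall f, f \in T -> #|f| = 2%N)
  (Tc : forall u v, connect (tree_rel T) u v).
Local Notation dist i j := (edist (p i) (p j)).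
Local Notation G := (uncoord_graph p s ord).
Local Notation len e := (edist (p e.1) (p e.2)).

Lemma tree_length_ge0 : 0 <= tree_length p T.
Proof.
apply: sumr_ge0 => f _; apply: sumr_ge0 => u _; apply: sumr_ge0 => v _; exact: edist_ge0.
Qed.

Definition Kd := (51 * d.+1)%N.

Lemma class_bound (L : R) : 0 < L ->
  \sum_(e in [set e in G | (L < len e) && (len e <= 2 * L)]) len e
     <= (64 * Kd ^ d)%N%:R * tree_length p T * s ^+ d.+1.
Proof.
move=> L0; have s1 := s_gt1.
have s0 : 0 < s by lra.
set rho := L / (4 * s + 4).
have rho0 : 0 < rho by rewrite /rho divr_gt0 //; lra.
have rhoL : rho * (4 * s + 4) = L by rewrite /rho divfK //; lra.
have rho8 : 8 * rho <= L by nra.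
have [S [sepS covS]] := net_exists p (ltW rho0).
pose sig i := odflt i [pick u in S | dist i u <= rho].
have sigP : forall i, sig i \in S /\ dist i (sig i) <= rho.
  move=> i; rewrite /sig; case: pickP => [u /andP[uS h]|none] //=.
  by case: (covS i) => u uS h; move: (none u); rewrite /= uS h.
set Cj := [set e in G | _].
have Bnd0 : 0 <= (64 * Kd ^ d)%N%:R * tree_length p T * s ^+ d.+1.
  apply: mulr_ge0; last by rewrite exprn_ge0 // ltW.
  by apply: mulr_ge0 => //; exact: tree_length_ge0.
case: (set_0Vmem Cj) => [->|[e0 e0C]]; first by rewrite big_set0.
have inC : forall e, e \in Cj -> [/\ e \in G, L < len e & len e <= 2 * L].
  by move=> e; rewrite inE => /andP[-> /andP[-> ->]].
have S2 : (1 < #|S|)%N.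
  apply/card_gt1P; exists (sig e0.1), (sig e0.2); split; [by case: (sigP e0.1)|by case: (sigP e0.2)|].
  apply/eqP => E; have [_ l0 _] := inC _ e0C.
  case: (sigP e0.1) => _ h1; case: (sigP e0.2) => _ h2.
  have := edist_triangle (p e0.1) (p (sig e0.1)) (p e0.2).
  rewrite E (edist_sym (p (sig e0.2))); rewrite E in h1; lra.
have HS := net_tree rho0 sepS T2 Tc S2.
set R0 := 3 * L.
have R00 : 0 <= R0 by rewrite /R0; lra.
pose F e := (sig e.1, cellf rho (p (sig e.1)) R0 (p (sig e.2))).
have Finj : {in Cj &, injective F}.
  move=> e f eC fC /= EF.
  have E1 : sig e.1 = sig f.1 by move: (congr1 fst EF).
  have E2' := congr1 snd EF; rewrite /= E1 in E2'.
  have [eG le1 le2] := inC _ eC; have [fG lf1 lf2] := inC _ fC.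
  have inball : forall g, g \in Cj -> sig g.2 \in [set u in S | edist (p (sig g.1)) (p u) <= R0].
    move=> g gC; have [_ _ lg2] := inC _ gC.
    rewrite inE; case: (sigP g.2) => -> h2; case: (sigP g.1) => _ h1 /=.
    have t1 := edist_triangle (p (sig g.1)) (p g.1) (p (sig g.2)).
    have t2 := edist_triangle (p g.1) (p g.2) (p (sig g.2)).
    rewrite edist_sym in h1; rewrite /R0; lra.
  have E2 : sig e.2 = sig f.2.
    apply: (cell_inj rho0 sepS R00 _ _ E2').
      by rewrite -E1; exact: inball.
    exact: inball.
  have close1 : dist f.1 e.1 <= 2 * rho.
    case: (sigP e.1) => _ h1; case: (sigP f.1) => _ h2.
    have := edist_triangle (p f.1) (p (sig f.1)) (p e.1).
    rewrite -E1 (edist_sym (p (sig e.1))); rewrite -E1 in h2; lra.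
  have close2 : dist f.2 e.2 <= 2 * rho.
    case: (sigP e.2) => _ h1; case: (sigP f.2) => _ h2.
    have := edist_triangle (p f.2) (p (sig f.2)) (p e.2).
    rewrite -E2 (edist_sym (p (sig e.2))); rewrite -E2 in h2; lra.
  have key : forall g, L < len g -> 2 * rho <= len g / (2 * s + 2).
    move=> g lg; rewrite ler_pdivlMr; last lra.
    have : 2 * rho * (2 * s + 2) = L by rewrite -rhoL; ring.
    lra.
  have c1 : cov1 p s e f.1 f.2.
    by rewrite /cov1 /= (le_trans close1 (key _ le1)) (le_trans close2 (key _ le1)).
  have c2 : cov1 p s f e.1 e.2.
    rewrite /cov1 /= (edist_sym (p e.1)) (edist_sym (p e.2)).
    by rewrite (le_trans close1 (key _ lf1)) (le_trans close2 (key _ lf1)).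
  apply/eqP; apply: contraT => ef.
  have GS := @graph_sep R d n p s ord.
  by move: (GS e f eG fG ef); rewrite c1 c2.
set M := (2 * (Num.truncn (R0 / (rho / d.+1%:R))).+1).+1.
have cardC : (#|Cj| <= #|S| * M ^ d)%N.
  rewrite -(card_in_imset Finj).
  apply: leq_trans (_ : #|setX S [set: {ffun 'I_d -> 'I_M}]| <= _)%N.
    apply: subset_leq_card; apply/subsetP => x /imsetP [e eC ->].
    by rewrite in_setX in_setT andbT; case: (sigP e.1).
  by rewrite cardsX cardsT card_ffun !card_ord.
have sumC : \sum_(e in Cj) len e <= #|Cj|%:R * (2 * L).
  rewrite mulr_natl -sumr_const; apply: ler_sum => e eC; by case: (inC _ eC).
have Mb := M_bound d rho0 R00.
rewrite -/M in Mb.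
have Mb' : (M%:R : R) <= Kd%:R * s.
  have e1 : R0 / rho = 12 * s + 12.
    rewrite /R0 -rhoL; field; lra.
  rewrite e1 -natr1 in Mb; rewrite /Kd natrM -natr1.
  have d0 : (d%:R : R) >= 0 by [].
  have : 0 <= (d%:R + 1) * (s - 1) by apply: mulr_ge0; lra.
  nra.
have MX : ((M ^ d)%N%:R : R) <= Kd%:R ^+ d * s ^+ d.
  rewrite natrX -exprMn; apply: lerXn2r => //; rewrite nnegrE //; exact: mulr_ge0 (ler0n _ _) (ltW s0).
have cardR : (#|Cj|%:R : R) <= #|S|%:R * (M ^ d)%N%:R by rewrite -natrM ler_nat.
apply: le_trans sumC _.
have SL : #|S|%:R * L <= 4 * tree_length p T * (4 * s + 4).
  by rewrite -rhoL mulrA ler_wpM2r //; lra.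
have l0 := tree_length_ge0.
have Y0 : (0 : R) <= (M ^ d)%N%:R by [].
have step1 : #|Cj|%:R * (2 * L) <= (M ^ d)%N%:R * (2 * (#|S|%:R * L)).
  have : #|Cj|%:R * (2 * L) <= #|S|%:R * (M ^ d)%N%:R * (2 * L) by rewrite ler_wpM2r //; lra.
  by move=> h; apply: le_trans h _; rewrite le_eqVlt; apply/orP; left; apply/eqP; ring.
apply: le_trans step1 _.
have step2 : (M ^ d)%N%:R * (2 * (#|S|%:R * L)) <= (M ^ d)%N%:R * (64 * s * tree_length p T).
  apply: ler_wpM2l => //; nra.
apply: le_trans step2 _.
have step3 : (M ^ d)%N%:R * (64 * s * tree_length p T) <= Kd%:R ^+ d * s ^+ d * (64 * s * tree_length p T).
  apply: ler_wpM2r => //; apply: mulr_ge0 => //; lra.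
apply: le_trans step3 _.
rewrite natrM natrX exprS.
by rewrite le_eqVlt; apply/orP; left; apply/eqP; ring.
Qed.

End Class.


Section Bigs.
Variable R : realType.

Lemma bigmax_seq_ge (I : eqType) (r : seq I) (F : I -> R) x :
  x \in r -> F x <= \big[Num.max/0]_(i <- r) F i.
Proof.
elim: r => // y r IH; rewrite in_cons big_cons => /orP[/eqP->|xr].
- by rewrite le_max lexx.
- by rewrite le_max IH ?orbT.
Qed.

Lemma bigmax_ord_ge n (F : 'I_n -> R) i : F i <= \big[Num.max/0]_(j < n) F j.
Proof. exact: (bigmax_seq_ge F (mem_index_enum i)). Qed.

Lemma bigmin_seq_le (I : eqType) (r : seq I) (P : pred I) (F : I -> R) c x :
  x \in r -> P x -> \big[Num.min/c]_(i <- r | P i) F i <= F x.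
Proof.
move=> + Px; elim: r => // y r IH; rewrite in_cons big_cons => /orP[/eqP<-|xr].
- by rewrite Px ge_min lexx.
- by case: ifP => _; rewrite ?ge_min IH ?orbT.
Qed.

Lemma bigmin_ord_le n (P : pred 'I_n) (F : 'I_n -> R) c i :
  P i -> \big[Num.min/c]_(j < n | P j) F j <= F i.
Proof. exact: (bigmin_seq_le F c (mem_index_enum i)). Qed.

End Bigs.

Unset Implicit Arguments.

Theorem theorem11 (d : nat) :
  exists C : nat,
  forall (R : realType) (n : nat) (p : 'I_n -> 'rV[R]_d) (s : R)
         (ord : seq ('I_n * 'I_n)) (T : {set {set 'I_n}}),
    (1 < n)%N ->
    injective p ->
    1 < s ->
    uniq ord ->
    (forall e : 'I_n * 'I_n, (e \in ord) = (e.1 != e.2)) ->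
    is_EMST p T ->
    graph_length p (uncoord_graph p s ord)
      <= C%:R * Num.max 1 (lg (aspect_ratio p)) * tree_length p T * s ^+ d.+1.
Proof.
exists (128 * Kd d ^ d)%N.
move=> R n p s ord T n1 pinj s1 _ ordm [[T2 Tc _] _].
set G := uncoord_graph p s ord.
set l := tree_length p T.
set D := diameter p; set m := min_dist p.
have dpos : forall i j, i != j -> 0 < edist (p i) (p j).
  move=> i j ij; rewrite lt_def edist_ge0 andbT; apply/eqP => /edist_eq0 /pinj E.
  by rewrite E eqxx in ij.
have Dge : forall i j, edist (p i) (p j) <= D.
  move=> i j; apply: le_trans (bigmax_ord_ge (fun i => \big[Num.max/0]_(j < n) edist (p i) (p j)) i).
  exact: (bigmax_ord_ge (fun j => edist (p i) (p j)) j).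
have mle : forall i j, i != j -> m <= edist (p i) (p j).
  move=> i j ij; rewrite /m /min_dist.
  have ji : j != i by rewrite eq_sym.
  have h1 := bigmin_ord_le (P := xpredT) (fun i => \big[Num.min/D]_(j < n | j != i) edist (p i) (p j)) D (i := i) isT.
  have h2 := bigmin_ord_le (P := fun j => j != i) (fun j => edist (p i) (p j)) D (i := j) ji.
  exact: le_trans h1 h2.
pose i0 : 'I_n := Ordinal (ltnW n1); pose i1 : 'I_n := Ordinal n1.
have i01 : i0 != i1 by [].
have D0 : 0 < D by apply: lt_le_trans (dpos _ _ i01) (Dge _ _).
have m0 : 0 < m.
  rewrite /m /min_dist; apply: (big_ind (fun x => 0 < x)) => //.
    by move=> x y hx hy; rewrite lt_min hx hy.
  move=> i _; apply: (big_ind (fun x => 0 < x)) => //.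
    by move=> x y hx hy; rewrite lt_min hx hy.
  move=> j ji; apply: dpos; by rewrite eq_sym.
have eG : forall e, e \in G -> e.1 != e.2.
  by move=> e /graph_mem; rewrite ordm.
have two0 : forall j : nat, (0 : R) < 2 ^+ j by move=> j; rewrite exprn_gt0.
have exP : exists j, D / 2 ^+ j.+1 < m.
  exists (Num.truncn (D / m)).
  rewrite ltr_pdivrMr // mulrC -ltr_pdivrMr //.
  apply: lt_le_trans (truncnS_gt _) _.
  have h := ltn_expl (Num.truncn (D / m)).+1 (isT : (1 < 2)%N).
  by rewrite -natrX ler_nat ltnW.
case: (ex_minnP exP) => J PJ minJ.
pose cls (j : nat) (x : R) := (D / 2 ^+ j.+1 < x) && (x <= 2 * (D / 2 ^+ j.+1)).
have clsE : forall e, e \in G -> exists j : 'I_J.+1, cls j (edist (p e.1) (p e.2)).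
  move=> e eGe; set x := edist (p e.1) (p e.2).
  have mx : m <= x by apply: mle; exact: eG.
  have xD : x <= D by exact: Dge.
  have exPx : exists j, D / 2 ^+ j.+1 < x by exists J; exact: lt_le_trans PJ mx.
  case: (ex_minnP exPx) => jx Pjx minjx.
  have jxJ : (jx < J.+1)%N by rewrite ltnS; apply: minjx; exact: lt_le_trans PJ mx.
  exists (Ordinal jxJ); rewrite /cls /= Pjx /=.
  case: jx Pjx minjx jxJ => [|j] Pjx minjx _.
    have t2 : (2 : R) != 0 by rewrite pnatr_eq0.
    by rewrite expr1 mulrC divfK.
  have : ~~ (D / 2 ^+ j.+1 < x) by apply/negP => /minjx; rewrite ltnn.
  rewrite -leNgt => h; apply: le_trans h _.
  have X0 : (2 : R) ^+ j.+1 != 0 by rewrite expf_neq0 // pnatr_eq0.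
  have t2 : (2 : R) != 0 by rewrite pnatr_eq0.
  rewrite (exprS _ j.+1) invfM.
  have -> : 2 * (D * (2^-1 * (2 ^+ j.+1)^-1)) = D / 2 ^+ j.+1.
    by field.
  by [].
set B := (64 * Kd d ^ d)%N%:R * l * s ^+ d.+1.
have B0 : 0 <= B.
  apply: mulr_ge0; last by rewrite exprn_ge0 //; lra.
  by apply: mulr_ge0 => //; exact: tree_length_ge0.
have sum1 : graph_length p G <= \sum_(j < J.+1) \sum_(e in G | cls j (edist (p e.1) (p e.2))) edist (p e.1) (p e.2).
  rewrite /graph_length.
  under [X in _ <= X]eq_bigr do rewrite big_mkcondr.
  rewrite exchange_big /=.
  apply: ler_sum => e eGe.
  case: (clsE e eGe) => j cj.
  rewrite (bigD1 j) //= cj lerDl; apply: sumr_ge0 => k _; case: ifP => // _; exact: edist_ge0.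
have sum2 : \sum_(j < J.+1) \sum_(e in G | cls j (edist (p e.1) (p e.2))) edist (p e.1) (p e.2)
    <= \sum_(j < J.+1) B.
  apply: ler_sum => j _.
  have := @class_bound R d n p s ord T s1 T2 Tc (D / 2 ^+ j.+1) (divr_gt0 D0 (two0 _)).
  apply: le_trans; rewrite le_eqVlt; apply/orP; left; apply/eqP.
  by apply: eq_bigl => e; rewrite inE.
rewrite sumr_const card_ord -mulr_natl in sum2.
have Jb : (J.+1%:R : R) <= 2 * Num.max 1 (lg (aspect_ratio p)).
  have mx1 : 1 <= Num.max 1 (lg (aspect_ratio p)) by rewrite le_max lexx.
  have [J0|Jpos] := posnP J; first by rewrite J0; lra.
  have nP : ~~ (D / 2 ^+ J < m).
    apply/negP => h; have := minJ J.-1; rewrite prednK // => /(_ h).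
    by move: Jpos; case: (J) => //= J' _; rewrite ltnn.
  move: nP; rewrite -leNgt ler_pdivlMr // mulrC -ler_pdivlMr // => h.
  have h2 : ln (2 ^+ J) <= ln (aspect_ratio p).
    rewrite ler_ln ?posrE //; last by rewrite /aspect_ratio divr_gt0.
  rewrite lnXn // in h2.
  have ln2 : 0 < ln (2 : R) by apply: ln_gt0; lra.
  have : (J%:R : R) <= lg (aspect_ratio p).
    by rewrite /lg ler_pdivlMr // mulr_natl.
  have : (1 : R) <= J%:R by rewrite ler1n.
  have := le_max (lg (aspect_ratio p)) 1 (lg (aspect_ratio p)); rewrite lexx orbT => hm.
  rewrite -natr1; lra.
apply: le_trans sum1 _; apply: le_trans sum2 _.
apply: le_trans (_ : 2 * Num.max 1 (lg (aspect_ratio p)) * B <= _).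
  by apply: ler_wpM2r.
rewrite /B natrM (natrM _ 128) le_eqVlt; apply/orP; left; apply/eqP; ring.
Qed.
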